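(* Let $A$ be a normed vector space over $\mathbb C$ with $A^\vee$ given the dual norm. On $\mathrm{Max}\,A$, the topology consisting of the sets $\{V\in\mathrm{Max}\,A:F(V)\in\mathcal U\}$, with $\mathcal U\subset\mathrm{Sub}\,A^\vee$ open in the lower Vietoris topology of $A^\vee$, is finer than the topology generated by the sets $\mathbf U_r(a)=\{V\in\mathrm{Max}\,A: d(a,V)>r\}$, $a\in A$, $r>0$.
   Context: $\mathrm{Max}\,A$ is the set of closed subspaces of $A$; $A^\vee$ the continuous dual; $F(V)=\{\phi\in A^\vee:\phi|_V=0\}$. The lower Vietoris topology on the set $\mathrm{Sub}\,A^\vee$ of subspaces of $A^\vee$ is generated by $\{\mathcal V:\mathcal V\cap\mathcal O\ne\emptyset\}$, $\mathcal O\subset A^\vee$ norm-open. *)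

(* Defs.v *)
From mathcomp Require Import all_boot all_order all_algebra.
From mathcomp Require Import all_classical all_reals all_analysis.
From mathcomp.real_closed Require Import complex.
Import Num.Theory GRing.Theory.

Set Implicit Arguments.
Unset Strict Implicit.
Unset Printing Implicit Defensive.

Local Open Scope ring_scope.
Local Open Scope classical_set_scope.
Local Open Scope complex_scope.

Definition topology_on (T : Type) (X : set T) (tau : set (set T)) : Prop :=
  [/\ (forall U, tau U -> U `<=` X),
      tau X,
      (forall U V, tau U -> tau V -> tau (U `&` V)) &
      (forall F : set (set T), F `<=` tau -> tau (\bigcup_(U in F) U))].

Definition generated_topology (T : Type) (X : set T) (S : set (set T))
  : set (set T) :=
  fun U => forall tau, topology_on X tau -> S `<=` tau -> tau U.

Section Dual.
Variables (R : realType) (A : normedModType R[i]).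

Definition MaxA : set (set A) :=
  [set V | [/\ closed V, V 0,
     (forall x y, V x -> V y -> V (x + y)) &
     (forall (c : R[i]) x, V x -> V (c *: x))]].

Definition cont_functional (phi : A -> R[i]) : Prop :=
  forall x (e : R), 0 < e -> exists2 d : R, 0 < d &
    forall y, `|x - y| < d%:C -> `|phi x - phi y| < e%:C.

Definition dual : set (A -> R[i]) :=
  [set phi | linear phi /\ cont_functional phi].

Definition dual_norm (phi : A -> R[i]) : R :=
  sup [set complex.Re `|phi a| | a in [set a : A | `|a| <= 1]].

Definition dual_open (O : set (A -> R[i])) : Prop :=
  O `<=` dual /\
  forall phi, O phi -> exists2 eps : R, 0 < eps &
    forall psi, dual psi -> dual_norm (fun a => phi a - psi a) < eps -> O psi.

Definition SubDual : set (set (A -> R[i])) :=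
  [set W | [/\ W `<=` dual, W (fun _ => 0),
     (forall phi psi, W phi -> W psi -> W (fun a => phi a + psi a)) &
     (forall (c : R[i]) phi, W phi -> W (fun a => c * phi a))]].

Definition Fann (V : set A) : set (A -> R[i]) :=
  [set phi | dual phi /\ forall v, V v -> phi v = 0].

Definition lower_vietoris : set (set (set (A -> R[i]))) :=
  generated_topology SubDual
    [set [set W | SubDual W /\ exists2 phi, W phi & O phi] | O in dual_open].

Definition F_topology : set (set (set A)) :=
  [set [set V | MaxA V /\ U (Fann V)] | U in lower_vietoris].

Definition dist (a : A) (V : set A) : R := inf [set complex.Re `|a - v| | v in V].

Definition Ubox (r : R) (a : A) : set (set A) :=
  [set V | MaxA V /\ r < dist a V].

Definition dist_topology : set (set (set A)) :=
  generated_topology MaxA [set Ubox r a | r in [set r : R | 0 < r] & a in setT].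

End Dual.

(* Main.v *)
Require Import Defs.
From mathcomp Require Import all_boot all_order all_algebra.
From mathcomp Require Import all_classical all_reals all_analysis.
From mathcomp.real_closed Require Import complex.
From mathcomp Require Import lra ring.
Local Open Scope classical_set_scope.

Module Aux.
Import Order.TTheory GRing.Theory Num.Theory.
Local Open Scope ring_scope.
Local Open Scope classical_set_scope.
Local Open Scope complex_scope.
Local Set Implicit Arguments.
Local Unset Strict Implicit.
Section H0.
Variables (R : realType) (A : normedModType R[i]).

Lemma ge0_complexE (z : R[i]) : 0 <= z -> z = (complex.Re z)%:C.
Proof. by case: z => a b; rewrite lecE /= => /andP[/eqP -> _]. Qed.

Lemma ReD (x y : R[i]) : complex.Re (x + y) = complex.Re x + complex.Re y.
Proof. by case: x; case: y. Qed.
Lemma ReN (x : R[i]) : complex.Re (- x) = - complex.Re x.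
Proof. by case: x. Qed.
Lemma ReB (x y : R[i]) : complex.Re (x - y) = complex.Re x - complex.Re y.
Proof. by rewrite ReD ReN. Qed.
Lemma ReC (t : R) : complex.Re t%:C = t. Proof. by []. Qed.
Lemma ReMC (t : R) (x : R[i]) : complex.Re (t%:C * x) = t * complex.Re x.
Proof. by case: x => a b /=; rewrite mul0r subr0. Qed.

Lemma normCE (z : R[i]) : `|z| = (complex.Re `|z|)%:C.
Proof. exact/ge0_complexE/normr_ge0. Qed.

Lemma CD (a b : R) : (a + b)%:C = a%:C + b%:C :> R[i].
Proof. by apply/eqP; rewrite eq_complex /= addr0 !eqxx. Qed.
Lemma CM (a b : R) : (a * b)%:C = a%:C * b%:C :> R[i].
Proof. by apply/eqP; rewrite eq_complex /= !mul0r !mulr0 subr0 addr0 !eqxx. Qed.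

Definition nA (x : A) : R := complex.Re `|x|.

Lemma nAE (x : A) : `|x| = (nA x)%:C.
Proof. exact/ge0_complexE/normr_ge0. Qed.

Lemma nA_ge0 x : 0 <= nA x.
Proof. by rewrite -lecR -nAE normr_ge0. Qed.

Lemma nAD x y : nA (x + y) <= nA x + nA y.
Proof. by have := ler_normD x y; rewrite !nAE -CD lecR. Qed.

Lemma nAZ (c : R[i]) x : nA (c *: x) = complex.Re `|c| * nA x.
Proof. by rewrite /nA normrZ [`|c|]normCE ReMC. Qed.

Lemma nAN x : nA (- x) = nA x.
Proof. by rewrite /nA normrN. Qed.

Lemma nAB x y : nA (x - y) = nA (y - x).
Proof. by rewrite /nA distrC. Qed.

Lemma nA0 : nA 0 = 0.
Proof. by rewrite /nA normr0. Qed.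

Lemma nA_eq0 x : nA x = 0 -> x = 0.
Proof. by move=> h; apply/normr0_eq0; rewrite nAE h. Qed.

Lemma normRC (t : R) : complex.Re `|t%:C| = `|t|.
Proof.
rewrite normc_def /= expr0n /= addr0 sqrtr_sqr //.
Qed.

Lemma nAsc (t : R) x : nA (t%:C *: x) = `|t| * nA x.
Proof. by rewrite nAZ normRC. Qed.

Lemma le1E x : (`|x| <= 1) = (nA x <= 1).
Proof. by rewrite nAE -lecR. Qed.

Lemma ltCE x (d : R) : (`|x| < d%:C) = (nA x < d).
Proof. by rewrite nAE ltcR. Qed.

Lemma ltCE' (z : R[i]) (d : R) : (`|z| < d%:C) = (complex.Re `|z| < d).
Proof. by rewrite [`|z|]normCE ltcR. Qed.

Lemma ReN_ge0 (z : R[i]) : 0 <= complex.Re `|z|.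
Proof. by rewrite -lecR -normCE normr_ge0. Qed.

Lemma ReN_D (z w : R[i]) : complex.Re `|z + w| <= complex.Re `|z| + complex.Re `|w|.
Proof. by have := ler_normD z w; rewrite [`|z+w|]normCE [`|z|]normCE [`|w|]normCE -CD lecR. Qed.

Lemma ReN_M (z w : R[i]) : complex.Re `|z * w| = complex.Re `|z| * complex.Re `|w|.
Proof. by rewrite normrM [`|z|]normCE [`|w|]normCE -CM. Qed.

Lemma ReN_N (z : R[i]) : complex.Re `|- z| = complex.Re `|z|.
Proof. by rewrite normrN. Qed.

Lemma ReN_le (z : R[i]) : complex.Re z <= complex.Re `|z|.
Proof.
case: z => a b; rewrite normc_def /=.
apply: (le_trans (ler_norm a)); rewrite -sqrtr_sqr ler_sqrt ?lerDl ?sqr_ge0 //.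
by rewrite addr_ge0 ?sqr_ge0.
Qed.

End H0.

Section H1.
Variables (R : realType) (A : normedModType R[i]).

Lemma inf_le_elt (E : set R) (m y : R) : (forall z, E z -> m <= z) -> E y -> inf E <= y.
Proof. by move=> hm Ey; apply: ge_inf => //; exists m => z Ez; exact: hm. Qed.

Lemma le_inf_all (E : set R) (z y : R) : E y -> (forall w, E w -> z <= w) -> z <= inf E.
Proof. by move=> Ey h; apply: lb_le_inf; [exists y | move=> w /h]. Qed.

Definition SL (q : A -> R) := [/\ forall x y, q (x + y) <= q x + q y, q 0 = 0 &
  forall (c : R) x, 0 < c -> q (c%:C *: x) <= c * q x].

Lemma C0 : (0 : R)%:C = 0 :> R[i]. Proof. by []. Qed.
Lemma C1 : (1 : R)%:C = 1 :> R[i]. Proof. by []. Qed.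

Lemma SL_eq q : SL q -> forall (c : R) x, 0 <= c -> q (c%:C *: x) = c * q x.
Proof.
move=> [_ q0 qh] c x; rewrite le_eqVlt => /orP[/eqP <-|c0].
  by rewrite C0 scale0r q0 mul0r.
apply/le_anti; rewrite qh //=.
have := qh c^-1 (c%:C *: x); rewrite invr_gt0 c0 scalerA -CM mulVf ?gt_eqF //.
rewrite C1 scale1r => /(_ isT) h.
by rewrite -(ler_pM2l c0) mulrA mulfV ?gt_eqF // mul1r in h.
Qed.

Lemma SL_lb q : SL q -> forall x, - q (- x) <= q x.
Proof.
move=> [qD q0 _] x; have := qD x (- x); rewrite subrr q0.
by move=> h; rewrite -subr_ge0 opprK.
Qed.

Definition shiftf (q : A -> R) (x y : A) : R :=
  inf [set q (y + t%:C *: x) - t * q x | t in [set t : R | 0 <= t]].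

Section Shift.
Variables (q : A -> R) (x : A).
Hypothesis Sq : SL q.

Lemma shift_lb y z : [set q (y + t%:C *: x) - t * q x | t in [set t : R | 0 <= t]] z ->
  - q (- y) <= z.
Proof.
case=> t /= t0 <-; case: Sq => qD _ _.
have := qD (y + t%:C *: x) (- y); rewrite addrC addKr (SL_eq Sq) //.
by move=> h; lra.
Qed.

Lemma shift_elt y t : 0 <= t -> shiftf q x y <= q (y + t%:C *: x) - t * q x.
Proof. by move=> t0; apply: inf_le_elt; [exact: shift_lb | exists t]. Qed.

Lemma shift_le y : shiftf q x y <= q y.
Proof. by have := shift_elt y (lexx 0); rewrite C0 scale0r addr0 mul0r subr0. Qed.

Lemma shift_neg : shiftf q x (- x) <= - q x.
Proof.
have := shift_elt (- x) ler01; rewrite C1 scale1r addNr mul1r.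
by case: Sq => _ -> _; rewrite sub0r.
Qed.

Lemma shift_SL : SL (shiftf q x).
Proof.
split.
- move=> y1 y2.
  have key : forall s t, 0 <= s -> 0 <= t -> shiftf q x (y1 + y2) <=
      (q (y1 + s%:C *: x) - s * q x) + (q (y2 + t%:C *: x) - t * q x).
    move=> s t s0 t0; apply: (le_trans (shift_elt _ (addr_ge0 s0 t0))).
    rewrite CD scalerDl addrACA mulrDl.
    case: Sq => qD _ _; have := qD (y1 + s%:C *: x) (y2 + t%:C *: x); lra.
  rewrite -lerBlDr; apply: le_inf_all; first by exists 0 => //=; rewrite lexx.
  move=> _ [t /= t0 <-]; rewrite lerBlDr -lerBlDl.
  apply: le_inf_all; first by exists 0 => //=; rewrite lexx.
  move=> _ [s /= s0 <-]; rewrite lerBlDl; exact: key.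
- apply/le_anti/andP; split.
    by have := shift_elt 0 (lexx 0); rewrite C0 !scale0r addr0 mul0r subr0; case: Sq => _ -> _.
  apply: le_inf_all; first by exists 0 => //=; rewrite lexx.
  by move=> _ [t /= t0 <-]; rewrite add0r (SL_eq Sq) // subrr.
- move=> c y c0.
  have ci : 0 < c^-1 by rewrite invr_gt0.
  rewrite -(ler_pM2l ci) mulrA mulVf ?gt_eqF // mul1r.
  apply: le_inf_all; first by exists 0 => //=; rewrite lexx.
  move=> _ [t /= t0 <-].
  rewrite -(ler_pM2l c0) mulrA mulrV ?unitfE ?gt_eqF // mul1r.
  apply: (le_trans (shift_elt _ (mulr_ge0 (ltW c0) t0))).
  by rewrite CM -scalerA -scalerDr (SL_eq Sq _ (ltW c0)) mulrBr mulrA.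
Qed.

End Shift.

Lemma CN (a : R) : (- a)%:C = - a%:C :> R[i].
Proof. by apply/eqP; rewrite eq_complex /= oppr0 !eqxx. Qed.

Section HBsec.
Variable p0 : A -> R.
Hypothesis Sp0 : SL p0.

Definition Sset (q : A -> R) := SL q /\ forall x, q x <= p0 x.
Definition Tsub := {q : A -> R | Sset q}.
Definition t0 : Tsub := exist _ p0 (conj Sp0 (fun x => lexx _)).
Definition Rel (f g : Tsub) : bool := `[< forall x, sval g x <= sval f x >].

Lemma chain_bound (Ch : set Tsub) : total_on Ch Rel -> exists t, forall s, Ch s -> Rel s t.
Proof.
move=> tot; pose Ch' := Ch `|` [set t0].
have lbE x (s : Tsub) : - p0 (- x) <= sval s x.
  case: s => s [Ss sp] /=; apply: le_trans (SL_lb Ss x).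
  by rewrite lerN2.
pose b x := inf [set sval s x | s in Ch'].
have bE x s : Ch' s -> b x <= sval s x.
  by move=> hs; apply: (inf_le_elt (m := - p0 (- x))) => [_ [s' _ <-]|]; [exact: lbE| exists s].
have bI x z : (forall s, Ch' s -> z <= sval s x) -> z <= b x.
  move=> h; apply: (le_inf_all (y := sval t0 x)); first by exists t0 => //; right.
  by move=> _ [s hs <-]; exact: h.
have common s1 s2 : Ch' s1 -> Ch' s2 -> exists2 s, Ch' s &
    (forall x, sval s x <= sval s1 x /\ sval s x <= sval s2 x).
  move=> h1 h2.
  have le0 (s' : Tsub) x : sval s' x <= sval t0 x by exact: (svalP s').2 x.
  case: h1 => [c1|->].
    case: h2 => [c2|->]; last first.
      exists s1; first by left.
      by move=> x; split; [|exact: le0].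
    have [/asboolP r12|/asboolP r21] := tot _ _ c1 c2.
      by exists s2; [left|move=> x; split; [exact: r12|]].
    by exists s1; [left|move=> x; split; [|exact: r21]].
  exists s2 => //.
have Sb : Sset b.
  split; [split|].
  - move=> x y; rewrite -lerBlDr; apply: (bI) => s1 h1.
    rewrite lerBlDr -lerBlDl; apply: (bI) => s2 h2; rewrite lerBlDl.
    have [s hs hle] := common _ _ h1 h2.
    apply: (le_trans (bE _ _ hs)).
    case: (svalP s) => [[sD _ _] _]; apply: (le_trans (sD x y)).
    by apply: lerD; [exact: (hle x).1 | exact: (hle y).2].
  - apply/le_anti/andP; split.
      apply: (le_trans (bE _ t0 _)); first by right.
      by case: Sp0 => _ h _; rewrite /= h.
    by apply: (bI) => s _; case: (svalP s) => [[_ -> _] _].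
  - move=> c x c0; have ci : 0 < c^-1 by rewrite invr_gt0.
    rewrite -(ler_pM2l ci) mulrA mulVf ?gt_eqF // mul1r.
    apply: (bI) => s hs.
    rewrite -(ler_pM2l c0) mulrA mulrV ?unitfE ?gt_eqF // mul1r.
    apply: (le_trans (bE _ _ hs)).
    by case: (svalP s) => [[_ _ sh] _]; exact: sh.
  - by move=> x; exact: (bE x t0 (or_intror erefl)).
exists (exist _ b Sb) => s hs; apply/asboolP => x /=; apply: bE; left; exact: hs.
Qed.

Lemma HB_real : exists g : A -> R, [/\ forall x y, g (x + y) = g x + g y,
  forall (t : R) x, g (t%:C *: x) = t * g x & forall x, g x <= p0 x].
Proof.
have Rr : forall t, Rel t t by move=> t; apply/asboolP => x.
have Rt : forall r s t, Rel r s -> Rel s t -> Rel r t.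
  move=> r s t /asboolP h1 /asboolP h2; apply/asboolP => x.
  exact: le_trans (h2 x) (h1 x).
have [q qmax] := @ZL_preorder Tsub t0 Rel Rr Rt chain_bound.
case: q qmax => g [Sg gp] qmax.
have gneg x : g (- x) = - g x.
  have Ss : Sset (shiftf g x).
    split; first exact: shift_SL.
    by move=> y; apply: le_trans (shift_le x Sg y) (gp y).
  have /qmax /asboolP /= h : Rel (exist _ g (conj Sg gp)) (exist _ _ Ss).
    by apply/asboolP => y /=; exact: (shift_le x Sg).
  apply/le_anti/andP; split; first exact: le_trans (h (- x)) (shift_neg x Sg).
  by have := SL_lb Sg x; rewrite lerNl.
exists g; split => //.
- move=> x y; apply/le_anti/andP; split; first by have [gD _ _] := Sg.
  have := gneg (x + y); rewrite opprD.
  have [gD _ _] := Sg; have := gD (- x) (- y); rewrite !gneg.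
  move=> h1 h2; lra.
- move=> t x; have [t0'|t0'] := leP 0 t; first exact: (SL_eq Sg).
  have nt : 0 <= - t by rewrite oppr_ge0 ltW.
  have := SL_eq Sg x nt.
  rewrite CN scaleNr gneg => h.
  by rewrite -[g _]opprK h mulNr opprK.
Qed.

End HBsec.
End H1.

Section H2.
Variables (R : realType) (A : normedModType R[i]).
Implicit Types (phi psi : A -> R[i]).

Lemma linE phi : linear phi -> forall c x y, phi (c *: x + y) = c * phi x + phi y.
Proof. by move=> L c x y; rewrite L. Qed.

Lemma linP phi : (forall c x y, phi (c *: x + y) = c * phi x + phi y) -> linear phi.
Proof. by move=> h c x y; exact: h. Qed.

Section Lin.
Variable phi : A -> R[i].
Hypothesis L : linear phi.
Lemma lin0 : phi 0 = 0.
Proof.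
have := linE L 1 0 0; rewrite scale1r addr0 mul1r => h.
by apply/(addrI (phi 0)); rewrite addr0 -h.
Qed.
Lemma linZ c x : phi (c *: x) = c * phi x.
Proof. by have := linE L c x 0; rewrite addr0 lin0 addr0. Qed.
Lemma linD x y : phi (x + y) = phi x + phi y.
Proof. by have := linE L 1 x y; rewrite scale1r mul1r. Qed.
Lemma linN x : phi (- x) = - phi x.
Proof. by rewrite -scaleN1r linZ mulN1r. Qed.
Lemma linB x y : phi (x - y) = phi x - phi y.
Proof. by rewrite linD linN. Qed.
End Lin.

Lemma dual_bound phi : dual phi -> exists M : R, forall x, complex.Re `|phi x| <= M * nA x.
Proof.
move=> [L C]; have [d d0 hd] := C 0 1 ltr01.
have hd' y : nA y < d -> complex.Re `|phi y| < 1.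
  by move=> hy; have := hd y; rewrite sub0r normrN ltCE hy (lin0 L) sub0r normrN ltCE' => /(_ isT).
exists (2 / d) => x.
have [nx0|nx0] := eqVneq (nA x) 0.
  by rewrite (nA_eq0 nx0) (lin0 L) normr0 nA0 mulr0.
have nxp : 0 < nA x by rewrite lt_neqAle eq_sym nx0 nA_ge0.
pose k := d / (2 * nA x).
have kp : 0 < k by rewrite divr_gt0 // mulr_gt0.
have kx : k * nA x = d / 2 by rewrite /k; field; rewrite nx0.
have hk : nA (k%:C *: x) < d.
  by rewrite nAsc ger0_norm ?(ltW kp) // kx ltr_pdivrMr // ltr_pMr // ltr1n.
have := hd' _ hk; rewrite (linZ L) ReN_M normRC ger0_norm ?(ltW kp) // => h.
 rewrite -(ler_pM2l kp); apply: (le_trans (ltW h)).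
by rewrite le_eqVlt; apply/orP; left; apply/eqP; rewrite /k; field; rewrite nx0 gt_eqF.
Qed.

Lemma bound_dual phi (M : R) : linear phi -> (forall x, complex.Re `|phi x| <= M * nA x) -> dual phi.
Proof.
move=> L hM; split => // x e e0.
have Mp : 0 < `|M| + 1 by rewrite ltr_wpDl.
exists (e / (`|M| + 1)); first by rewrite divr_gt0.
move=> y; rewrite ltCE -(linB L) ltCE' => hy.
apply: (le_lt_trans (hM _)).
apply: (le_lt_trans (y := (`|M| + 1) * nA (x - y))).
  by rewrite ler_wpM2r ?nA_ge0 // (le_trans (ler_norm M)) // lerDl.
by rewrite -ltr_pdivlMl // mulrC.
Qed.


Lemma dual0 : dual (fun _ : A => 0 : R[i]).
Proof.
apply: (@bound_dual _ 0).
  by apply: linP => c x y; rewrite mulr0 addr0.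
by move=> x; rewrite normr0 mul0r.
Qed.

Lemma dualD phi psi : dual phi -> dual psi -> dual (fun a => phi a + psi a).
Proof.
move=> dp dq; have [M1 h1] := dual_bound dp; have [M2 h2] := dual_bound dq.
apply: (@bound_dual _ (M1 + M2)).
  apply: linP => c x y; rewrite (linE dp.1) (linE dq.1) mulrDr.
  by rewrite addrACA.
move=> x; apply: (le_trans (ReN_D _ _)); rewrite mulrDl; exact: lerD.
Qed.

Lemma dualB phi psi : dual phi -> dual psi -> dual (fun a => phi a - psi a).
Proof.
move=> dp dq; have [M1 h1] := dual_bound dp; have [M2 h2] := dual_bound dq.
apply: (@bound_dual _ (M1 + M2)).
  apply: linP => c x y; rewrite (linE dp.1) (linE dq.1) mulrBr.
  by rewrite opprD addrACA.
move=> x; apply: (le_trans (ReN_D _ _)); rewrite mulrDl ReN_N; exact: lerD.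
Qed.

Lemma dualM (c : R[i]) phi : dual phi -> dual (fun a => c * phi a).
Proof.
move=> dp; have [M h] := dual_bound dp.
apply: (@bound_dual _ (complex.Re `|c| * M)).
  apply: linP => c' x y; rewrite (linE dp.1) mulrDr.
  by rewrite mulrCA.
move=> x; rewrite ReN_M -mulrA; apply: ler_wpM2l; [exact: ReN_ge0| exact: h].
Qed.

Lemma SubDual_Fann (V : set A) : SubDual (Fann V).
Proof.
split.
- by move=> phi [].
- by split; [exact: dual0|].
- move=> phi psi [dp hp] [dq hq]; split; first exact: dualD.
  by move=> v Vv; rewrite hp // hq // addr0.
- move=> c phi [dp hp]; split; first exact: dualM.
  by move=> v Vv; rewrite hp // mulr0.
Qed.

Definition NE phi := [set complex.Re `|phi a| | a in [set a : A | `|a| <= 1]].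

Lemma NE_ub phi : dual phi -> has_ubound (NE phi).
Proof.
move=> dp; have [M hM] := dual_bound dp.
exists `|M| => _ [a /= ha <-]; rewrite le1E in ha.
apply: (le_trans (hM a)); apply: (le_trans (ler_norm _)).
rewrite normrM (ger0_norm (nA_ge0 a)); apply: ler_piMr => //.
Qed.

Lemma N_ub phi a : dual phi -> nA a <= 1 -> complex.Re `|phi a| <= dual_norm phi.
Proof.
move=> dp ha; apply: (ub_le_sup (NE_ub dp)); exists a => //=; by rewrite le1E.
Qed.

Lemma N_le phi (K : R) : (forall a, nA a <= 1 -> complex.Re `|phi a| <= K) -> dual_norm phi <= K.
Proof.
move=> h; apply: ge_sup.
  by exists (complex.Re `|phi 0|), 0 => //=; rewrite normr0 ler01.
by move=> _ [a /= ha <-]; apply: h; rewrite -le1E.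
Qed.

Lemma N_ge0 phi : dual phi -> 0 <= dual_norm phi.
Proof.
move=> dp; have := N_ub (a := 0) dp; rewrite nA0 (lin0 dp.1) normr0 => /(_ ler01) //.
Qed.

Lemma N_bound phi : dual phi -> forall x, complex.Re `|phi x| <= dual_norm phi * nA x.
Proof.
move=> dp x; have [nx0|nx0] := eqVneq (nA x) 0.
  by rewrite (nA_eq0 nx0) (lin0 dp.1) normr0 nA0 mulr0.
have nxp : 0 < nA x by rewrite lt_neqAle eq_sym nx0 nA_ge0.
pose k := (nA x)^-1.
have kp : 0 < k by rewrite invr_gt0.
have hk : nA (k%:C *: x) <= 1.
  by rewrite nAsc ger0_norm ?(ltW kp) // mulVf.
have := N_ub dp hk; rewrite (linZ dp.1) ReN_M normRC ger0_norm ?(ltW kp) // => h.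
by rewrite -(ler_pM2l kp); apply: (le_trans h); rewrite mulrCA /k mulVf // mulr1.
Qed.

End H2.

Section H3.
Variables (R : realType) (A : normedModType R[i]).
Implicit Types (phi psi : A -> R[i]) (V : set A).

Section Dist.
Variable V : set A.
Hypothesis MV : MaxA V.

Lemma dist_le x v : V v -> dist x V <= nA (x - v).
Proof.
move=> Vv; apply: (inf_le_elt (m := 0)); last by exists v.
by move=> _ [w _ <-]; exact: nA_ge0.
Qed.

Lemma dist_ge x z : (forall v, V v -> z <= nA (x - v)) -> z <= dist x V.
Proof.
move=> h; case: MV => _ V0 _ _.
apply: (le_inf_all (y := nA (x - 0))); first by exists 0.
by move=> _ [v Vv <-]; exact: h.
Qed.

Lemma dist_SL : SL (fun x => dist x V).
Proof.
case: MV => _ V0 VD VZ; split.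
- move=> x y; rewrite -lerBlDr; apply: dist_ge => v Vv.
  rewrite lerBlDr -lerBlDl; apply: dist_ge => w Vw; rewrite lerBlDl.
  apply: (le_trans (dist_le _ (VD _ _ Vv Vw))).
  have -> : x + y - (v + w) = (x - v) + (y - w) by rewrite opprD addrACA.
  exact: nAD.
- apply/le_anti/andP; split.
    by have := dist_le 0 V0; rewrite subr0 nA0.
  by apply: dist_ge => v _; exact: nA_ge0.
- move=> c x c0; have ci : 0 < c^-1 by rewrite invr_gt0.
  rewrite -(ler_pM2l ci) mulrA mulVf ?gt_eqF // mul1r.
  apply: dist_ge => v Vv.
  rewrite -(ler_pM2l c0) mulrA mulrV ?unitfE ?gt_eqF // mul1r.
  apply: (le_trans (dist_le _ (VZ c%:C _ Vv))).
  by rewrite -scalerBr nAsc ger0_norm ?(ltW c0).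
Qed.

End Dist.

Lemma Re_i (r : R) : complex.Re ('i * r%:C) = 0.
Proof. by rewrite /= !mul0r mulr0 subr0. Qed.

Lemma HB_dist V a : MaxA V -> exists phi, [/\ dual phi, (forall v, V v -> phi v = 0),
  (forall x, complex.Re `|phi x| <= nA x) & dist a V <= complex.Re `|phi a|].
Proof.
move=> MV; have Sp := dist_SL MV; have [_ V0 VD VZ] := MV.
pose p x := dist x V.
have Sp0 := shift_SL a Sp.
have [g [gD gZ gp0]] := HB_real Sp0.
have gp x : g x <= p x := le_trans (gp0 x) (shift_le a Sp x).
have gN x : g (- x) = - g x by rewrite -scaleN1r -C1 -CN gZ mulN1r.
have ga : p a <= g a.
  by have := le_trans (gp0 (- a)) (shift_neg a Sp); rewrite gN lerN2.
have gn x : g x <= nA x by apply: (le_trans (gp x)); have := dist_le x V0; rewrite subr0.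
have gV v : V v -> g v = 0.
  move=> Vv; apply/le_anti/andP; split.
    by apply: (le_trans (gp v)); have := dist_le v Vv; rewrite subrr nA0.
  have Vn : V (- v) by rewrite -scaleN1r; exact: VZ.
  have := le_trans (gp (- v)) (dist_le (- v) Vn); rewrite subrr nA0 gN.
  by rewrite oppr_le0.
pose phi x := (g x)%:C - 'i * (g ('i *: x))%:C.
have ReP x : complex.Re (phi x) = g x by rewrite /phi ReB Re_i subr0.
have cE (c : R[i]) x : c *: x = (complex.Re c)%:C *: x + (complex.Im c)%:C *: ('i *: x).
  by rewrite scalerA -scalerDl [c in LHS]complexE mulrC.
have Lphi : linear phi.
  have gi x : g ('i *: ('i *: x)) = - g x.
    by rewrite scalerA -expr2 sqr_i scaleN1r gN.
  have hSC (a' b' : R[i]) (v : A) : a' *: (b' *: v) = b' *: (a' *: v).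
    by rewrite !scalerA mulrC.
  apply: linP => c x y.
  rewrite /phi gD cE gD !gZ scalerDr gD scalerDr gD hSC gZ hSC gZ gi.
  case: c => al be /=.
  by apply/eqP; rewrite eq_complex /=; apply/andP; split; apply/eqP; ring.
have Re_phi_c x (z : R[i]) : z = phi x -> complex.Re `|z| <= nA x.
  move=> ->; have [z0|z0] := eqVneq (phi x) 0.
    by rewrite z0 normr0 nA_ge0.
  pose c := `|phi x| / phi x.
  have -> : `|phi x| = phi (c *: x) by rewrite (linZ Lphi) /c divfK.
  rewrite ReP; apply: (le_trans (gn _)); rewrite nAZ.
  have -> : `|c| = 1 by rewrite /c normrM normrV ?unitfE // normr_id mulfV // normr_eq0.
  by rewrite mul1r.
have bphi x : complex.Re `|phi x| <= nA x by exact: Re_phi_c.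
exists phi; split.
- apply: (@bound_dual _ _ _ 1) => // x; rewrite mul1r; exact: bphi.
- move=> v Vv; rewrite /phi gV // gV //; last by exact: VZ.
  by rewrite mulr0 subr0.
- exact: bphi.
- apply: (le_trans ga); rewrite -ReP; exact: ReN_le.
Qed.

End H3.

Section H4.
Variables (R : realType) (A : normedModType R[i]).
Implicit Types (phi psi : A -> R[i]) (V : set A).

Definition Oset (r : R) (a : A) : set (A -> R[i]) :=
  [set psi | dual psi /\ r * dual_norm psi < complex.Re `|psi a|].

Lemma Fann_dist V phi (r : R) a : MaxA V -> Fann V phi ->
  r * dual_norm phi < complex.Re `|phi a| -> r < dist a V.
Proof.
move=> MV [dp hp] hr; have [_ V0 _ _] := MV.
have Np := N_ge0 dp.
have hb v : V v -> complex.Re `|phi a| <= dual_norm phi * nA (a - v).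
  by move=> Vv; have := N_bound dp (a - v); rewrite (linB dp.1) (hp v Vv) subr0.
have Npos : 0 < dual_norm phi.
  rewrite lt_neqAle Np andbT; apply/eqP => N0.
  by have := hb 0 V0; move: hr; rewrite -N0 mulr0 mul0r => h1 h2; lra.
have : r < complex.Re `|phi a| / dual_norm phi by rewrite ltr_pdivlMr // mulrC.
move=> h; apply: (lt_le_trans h); apply: dist_ge => // v Vv.
by rewrite ler_pdivrMr // mulrC; exact: hb.
Qed.

Lemma Oset_open (r : R) a : 0 < r -> dual_open (Oset r a).
Proof.
move=> r0; split; first by move=> psi [].
move=> phi [dp hphi].
pose m := complex.Re `|phi a| - r * dual_norm phi.
have m0 : 0 < m by rewrite /m subr_gt0.
have K0 : 0 < nA a + r + 1 by have := nA_ge0 a; lra.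
exists (m / (nA a + r + 1)); first by rewrite divr_gt0.
move=> psi dq hD; split => //.
pose D := dual_norm (fun a => phi a - psi a).
have dB := dualB dp dq.
have D0 : 0 <= D := N_ge0 dB.
have h1 : complex.Re `|phi a| <= complex.Re `|psi a| + D * nA a.
  have -> : phi a = psi a + (phi a - psi a) by rewrite addrCA subrr addr0.
  apply: (le_trans (ReN_D _ _)); rewrite lerD2l.
  have := N_bound dB a; rewrite -/D.
  by [].
have h2 : dual_norm psi <= dual_norm phi + D.
  apply: N_le => x hx.
  have -> : psi x = phi x + - (phi x - psi x) by rewrite opprB addrCA subrr addr0.
  apply: (le_trans (ReN_D _ _)); rewrite ReN_N.
  apply: lerD; first exact: N_ub.
  exact: (N_ub (phi := fun a => phi a - psi a)).
have h3 : D * (nA a + r + 1) < m by rewrite -ltr_pdivlMr.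
have h4 : r * dual_norm psi <= r * (dual_norm phi + D) by rewrite ler_pM2l.
have := nA_ge0 a; rewrite /m in h3; nra.
Qed.


Lemma LV_open (U : set (set (A -> R[i]))) :
  lower_vietoris U -> U `<=` @SubDual R A.
Proof.
move=> hU; apply: (hU (fun W => W `<=` @SubDual R A)).
  split => //.
    by move=> U1 U2 h1 _ x [/h1].
  by move=> F hF x [W /hF hW /hW].
move=> X [ Oo _ <-] W [] //.
Qed.

Lemma F_top : topology_on (@MaxA R A) (@F_topology R A).
Proof.
split.
- by move=> _ [U' _ <-] V [].
- exists (@SubDual R A); first by move=> tau [_ h _ _] _.
  by apply/seteqP; split => V /= => [[]//|MV]; split => //; exact: SubDual_Fann.
- move=> _ _ [U1 h1 <-] [U2 h2 <-]; exists (U1 `&` U2).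
    move=> tau htau hS; case: (htau) => _ _ hI _.
    by apply: hI; [exact: h1 | exact: h2].
  by apply/seteqP; split => V /= => [[MV [a b]]|[[MV a] [_ b]]].
- move=> F hF.
  pose G := [set W | lower_vietoris W /\ F [set V | MaxA V /\ W (Fann V)]].
  exists (\bigcup_(W in G) W).
    move=> tau htau hS; case: (htau) => _ _ _ hU; apply: hU => W [hW _].
    exact: hW.
  apply/seteqP; split => V /=.
    by move=> [MV [W [_ GW] WV]]; exists [set V | MaxA V /\ W (Fann V)].
  move=> [U FU UV]; have [W hW eW] := hF U FU.
  rewrite -eW in UV; case: UV => MV WV; split => //.
  by exists W => //; split => //; rewrite eW.
Qed.

Lemma Ubox_F (r : R) (a : A) : 0 < r -> @F_topology R A (Ubox r a).
Proof.
move=> r0.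
exists [set W | SubDual W /\ exists2 phi, W phi & Oset r a phi].
  by move=> tau _ hS; apply: hS; exists (Oset r a) => //; exact: Oset_open.
apply/seteqP; split => V /=.
  move=> [MV [_ [phi FV [_ hO]]]]; split => //.
  exact: Fann_dist FV hO.
move=> [MV hr]; split => //; split; first exact: SubDual_Fann.
have [phi [dp hv hb hd]] := HB_dist a MV.
exists phi; first by split.
split => //.
have N1 : dual_norm phi <= 1 by apply: N_le => x hx; exact: le_trans (hb x) hx.
apply: (le_lt_trans (y := r)); first by rewrite -[leRHS]mulr1 ler_pM2l.
exact: lt_le_trans hr hd.
Qed.

End H4.


End Aux.
Import Aux.
Unset Implicit Arguments.

Theorem lemma7p24 (R : realType) (A : normedModType R[i]) :
  @dist_topology R A `<=` @F_topology R A.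
Proof.
move=> U hU; apply: hU; first exact: Aux.F_top.
by move=> _ [r r0 [a _ <-]]; exact: Aux.Ubox_F.
Qed.
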